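(* For each $t\ge 0$, the set of simplices of $\mathrm{VR}_t(\mathcal X,d_\theta)$ that meet both $\mathcal C$ and $\mathcal Y^\circ$ is exactly \[ \bigcup_{u,v\ge 0,\ \|(u,v)\|_{\ell^p}\le t}\Bigl(\mathrm{VR}_t(\mathcal C^{\le u})\star \mathrm{VR}_t(\mathcal Y^{\le v})\Bigr). \] In particular, when $p=\infty$, \[ \mathrm{VR}_t(\mathcal X,d_\theta)=\mathrm{VR}_t(\mathcal C,\beta)\cup \mathrm{VR}_t(\mathcal Y^\circ,d_{\mathrm{reg}})\cup\Bigl(\mathrm{VR}_t(\mathcal C^{\le t})\star \mathrm{VR}_t(\mathcal Y^{\le t})\Bigr). \]
   Context: Let $A$ be a unital $C^*$-algebra, $H$ a Hilbert space, $\mathcal X=\mathrm{CB}(A,B(H))$, $\mathcal C=\mathrm{CP}(A,B(H))$ with Bures distance $\beta$. Fix $\theta\in\mathcal C$, $\lambda>0$, $\alpha\in(0,1]$, $p\in[1,\infty]$, and let $d_\theta=\beta^{BK}_{\theta,\lambda,p,\alpha}$ be the Bures--Kuratowski metric. Let $\mathcal Y=(\mathcal X\setminus\mathcal C)\sqcup\{\ast\}$ with metric $d_{\mathrm{reg}}$ ($=\lambda\delta_{\mathrm{reg}}^\alpha$ on non-CP pairs and $\lambda\delta_{\mathrm{reg}}(\cdot,0)^\alpha$ to $\ast$, $\delta_{\mathrm{reg}}$ the regular-representation metric), $\mathcal Y^\circ=\mathcal Y\setminus\{\ast\}$. Then $d_\theta=\beta$ on $\mathcal C$, $d_\theta=d_{\mathrm{reg}}$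 on $\mathcal Y^\circ$, and $d_\theta(x,y)=\|(r_{\mathcal C}(x),r_{\mathcal Y}(y))\|_{\ell^p}$ for $x\in\mathcal C$, $y\in\mathcal Y$, with $r_{\mathcal C}(x)=\beta(x,\theta)$, $r_{\mathcal Y}(y)=d_{\mathrm{reg}}(y,\ast)$. $\mathrm{VR}_t(Z,d)$ is the Vietoris--Rips complex (finite subsets of diameter $\le t$). $\mathcal C^{\le u}=\{x\in\mathcal C: r_{\mathcal C}(x)\le u\}$, $\mathcal Y^{\le v}=\{y\in\mathcal Y^\circ: r_{\mathcal Y}(y)\le v\}$; $\mathrm{VR}_t(\mathcal C^{\le u})$ and $\mathrm{VR}_t(\mathcal Y^{\le v})$ are the induced subcomplexes of $\mathrm{VR}_t(\mathcal C,\beta)$ and $\mathrm{VR}_t(\mathcal Y^\circ,d_{\mathrm{reg}})$ on these vertex sets. For complexes $K,L$ on disjoint vertex sets, $K\star L=\{\sigma\cup\tau:\sigma\in K,\tau\in L,\sigma\ne\varnothing,\tau\neq\varnothing\}$. *)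

(* Defs.v *)
From HB Require Import structures.
From mathcomp Require Import all_boot all_order all_algebra.
From mathcomp Require Import all_classical all_reals all_analysis.
Set Implicit Arguments. Unset Strict Implicit. Unset Printing Implicit Defensive.
Import Order.TTheory GRing.Theory Num.Theory.
Local Open Scope classical_set_scope.
Local Open Scope ring_scope.

Section Defs.
Context {R : realType} {X : Type}.

Definition lp_norm (p : \bar R) (a b : R) : R :=
  match p with
  | EFin q => (a `^ q + b `^ q) `^ q^-1
  | +oo%E => Num.max a b
  | -oo%E => 0
  end.

Definition metric_on {T : Type} (S : set T) (d : T -> T -> R) : Prop :=
  [/\ forall x y, S x -> S y -> 0 <= d x y,
      forall x y, S x -> S y -> (d x y = 0 <-> x = y),
      forall x y, S x -> S y -> d x y = d y x &
      forall x y z, S x -> S y -> S z -> d x z <= d x y + d y z].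

(* Points of Y = (X \ C) ⊔ {*}, encoded in option X with None = * *)
Definition Yset (C : set X) : set (option X) :=
  fun o => match o with Some x => ~ C x | None => True end.

Definition dYo (dreg : option X -> option X -> R) (x y : X) : R :=
  dreg (Some x) (Some y).

Definition dtheta (C : set X) (beta : X -> X -> R)
  (dreg : option X -> option X -> R) (theta : X) (p : \bar R) (x y : X) : R :=
  match `[< C x >], `[< C y >] with
  | true, true => beta x y
  | false, false => dreg (Some x) (Some y)
  | true, false => lp_norm p (beta x theta) (dreg (Some y) None)
  | false, true => lp_norm p (beta y theta) (dreg (Some x) None)
  end.

Definition VR (t : R) (Z : set X) (d : X -> X -> R) : set (set X) :=
  [set s | [/\ finite_set s, s !=set0, s `<=` Z &
             forall x y, s x -> s y -> d x y <= t]].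

Definition Cle (C : set X) (beta : X -> X -> R) (theta : X) (u : R) : set X :=
  [set x | C x /\ beta x theta <= u].
Definition Yle (C : set X) (dreg : option X -> option X -> R) (v : R) : set X :=
  [set y | ~ C y /\ dreg (Some y) None <= v].

Definition join (K L : set (set X)) : set (set X) :=
  [set s | exists a b, [/\ K a, L b, a !=set0, b !=set0 & s = a `|` b]].

End Defs.

(* Main.v *)
Require Import Defs.
From HB Require Import structures.
From mathcomp Require Import all_boot all_order all_algebra.
From mathcomp Require Import all_classical all_reals all_analysis.
From mathcomp Require Import finmap.
Import Order.TTheory GRing.Theory Num.Theory.
Local Open Scope classical_set_scope.
Local Open Scope ring_scope.

Section H.
Context {R : realType} {X : Type}.
Implicit Types (C : set X) (beta : X -> X -> R) (dreg : option X -> option X -> R).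

Lemma seq_max (s : seq R) : s != [::] -> exists2 m, m \in s & forall x, x \in s -> x <= m.
Proof.
elim: s => // a s IH _.
have [->|sn] := eqVneq s [::].
  by exists a; rewrite ?mem_seq1 // => x; rewrite mem_seq1 => /eqP->.
have [m ms mM] := IH sn.
have [am|ma] := leP a m.
  exists m; first by rewrite inE ms orbT.
  by move=> x; rewrite inE => /orP[/eqP->//|/mM].
exists a; first by rewrite inE eqxx.
move=> x; rewrite inE => /orP[/eqP->//|/mM xm]; exact: (le_trans xm (ltW ma)).
Qed.

Lemma set_max (A : set X) (f : X -> R) : finite_set A -> A !=set0 ->
  exists2 x, A x & forall y, A y -> f y <= f x.
Proof.
move=> fA [a Aa].
have /finite_fsetP[F FE] := finite_image f fA.
have : finmap.enum_fset F != [::].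
  apply/eqP => F0.
  have : [set` F] (f a) by rewrite -FE; exists a.
  by rewrite /= -[f a \in F]/(f a \in finmap.enum_fset F) F0.
move=> /seq_max[m mF mM].
have : (f @` A) m by rewrite FE.
case=> x Ax fxm; exists x => // y Ay; rewrite fxm; apply: mM.
have : [set` F] (f y) by rewrite -FE; exists y.
by [].
Qed.

Lemma lp_mono p (a b a' b' : R) : (1%:E <= p)%E -> 0 <= a -> 0 <= b ->
  a <= a' -> b <= b' -> lp_norm p a b <= lp_norm p a' b'.
Proof.
move=> p1 a0 b0 aa bb.
case: p p1 => [q||] //=; last by move=> _; rewrite ge_max !le_max aa bb orbT.
rewrite lee_fin => q1.
have q0 : 0 <= q by apply: le_trans q1.
apply: ge0_ler_powR; rewrite ?invr_ge0 ?nnegrE ?addr_ge0 ?powR_ge0 //.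
apply: lerD; apply: ge0_ler_powR; rewrite ?nnegrE //.
  exact: le_trans aa.
exact: le_trans bb.
Qed.

Lemma dtCC C beta dreg theta p x y : C x -> C y ->
  dtheta C beta dreg theta p x y = beta x y.
Proof. by move=> cx cy; rewrite /dtheta !asboolT. Qed.
Lemma dtNN C beta dreg theta p x y : ~ C x -> ~ C y ->
  dtheta C beta dreg theta p x y = dreg (Some x) (Some y).
Proof. by move=> cx cy; rewrite /dtheta !asboolF. Qed.
Lemma dtCN C beta dreg theta p x y : C x -> ~ C y ->
  dtheta C beta dreg theta p x y = lp_norm p (beta x theta) (dreg (Some y) None).
Proof. by move=> cx cy; rewrite /dtheta asboolT // asboolF. Qed.
Lemma dtNC C beta dreg theta p x y : ~ C x -> C y ->
  dtheta C beta dreg theta p x y = lp_norm p (beta y theta) (dreg (Some x) None).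
Proof. by move=> cx cy; rewrite /dtheta asboolF // asboolT. Qed.

End H.

Section M.
Context {R : realType} {X : Type}.
Variables (C : set X) (beta : X -> X -> R) (dreg : option X -> option X -> R)
  (theta : X) (p : \bar R).
Hypotheses (mb : metric_on C beta) (md : metric_on (Yset C) dreg) (Ct : C theta)
  (p1 : (1%:E <= p)%E).

Lemma b0 x : C x -> 0 <= beta x theta.
Proof. by case: mb => h _ _ _ cx; apply: h. Qed.
Lemma d0 y : ~ C y -> 0 <= dreg (Some y) None.
Proof. by case: md => h _ _ _ cy; apply: h. Qed.

Lemma rev_dir t u v a b : 0 <= u -> 0 <= v -> lp_norm p u v <= t ->
  VR t (Cle C beta theta u) beta a -> VR t (Yle C dreg v) (dYo dreg) b ->
  VR t setT (dtheta C beta dreg theta p) (a `|` b).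
Proof.
move=> u0 v0 uvt [fa na sa da] [fb nb sb db]; split.
- by rewrite finite_setU.
- by case: na => x ax; exists x; left.
- by [].
have lp x y : a x -> b y -> lp_norm p (beta x theta) (dreg (Some y) None) <= t.
  move=> ax bY; have [cx bx] := sa x ax; have [cy dy] := sb y bY.
  apply: le_trans uvt; apply: lp_mono => //; [exact: b0|exact: d0].
move=> x y [ax|bx] [ay|bY].
- have [cx _] := sa x ax; have [cy _] := sa y ay.
  by rewrite dtCC //; apply: da.
- have [cx _] := sa x ax; have [cy _] := sb y bY.
  by rewrite dtCN //; apply: lp.
- have [cx _] := sb x bx; have [cy _] := sa y ay.
  by rewrite dtNC //; apply: lp.
- have [cx _] := sb x bx; have [cy _] := sb y bY.
  by rewrite dtNN //; apply: db.
Qed.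

Lemma part1 t : 0 <= t ->
  ([set s | VR t setT (dtheta C beta dreg theta p) s /\
            (s `&` C !=set0) /\ (s `&` ~` C !=set0)]
   = \bigcup_(uv in [set uv : R * R | [/\ 0 <= uv.1, 0 <= uv.2 &
                                          lp_norm p uv.1 uv.2 <= t]])
       join (VR t (Cle C beta theta uv.1) beta)
            (VR t (Yle C dreg uv.2) (dYo dreg))).
Proof.
move=> t0; apply/seteqP; split => s.
- move=> [[fs ns _ ds] [nC nN]].
  have [x0 [sx0 cx0] mx] := set_max _ (fun x => beta x theta) (finite_setIl C fs) nC.
  have [y0 [sy0 cy0] my] := set_max _ (fun y => dreg (Some y) None)
      (finite_setIl (~` C) fs) nN.
  exists (beta x0 theta, dreg (Some y0) None).
    split => /=; [exact: b0|exact: d0|].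
    by rewrite -(dtCN C beta dreg theta p _ _ cx0 cy0); apply: ds.
  exists (s `&` C), (s `&` ~` C); split => //.
  + split; [exact: finite_setIl| by []| |].
      by move=> x [sx cx]; split => //; apply: mx.
    move=> x y [sx cx] [sy cy]; rewrite -(dtCC C beta dreg theta p _ _ cx cy); exact: ds.
  + split; [exact: finite_setIl| by []| |].
      by move=> x [sx cx]; split => //; apply: my.
    move=> x y [sx cx] [sy cy]; rewrite /dYo -(dtNN C beta dreg theta p _ _ cx cy); exact: ds.
  + apply/seteqP; split => x.
      by move=> sx; have [cx|cx] := pselect (C x); [left|right].
    by move=> [[]|[]].
- move=> [[u v] [/= u0 v0 uvt]] [a [b [Ka Kb na nb ->]]].
  split; first exact: (rev_dir _ _ _ _ _ u0 v0 uvt Ka Kb).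
  case: Ka => _ _ sa _; case: Kb => _ _ sb _.
  split.
    by case: na => x ax; exists x; split; [left|case: (sa x ax)].
  by case: nb => x bx; exists x; split; [right|case: (sb x bx)].
Qed.

End M.


Theorem theorem6p5 (R : realType) (X : Type) (C : set X)
  (beta : X -> X -> R) (dreg : option X -> option X -> R)
  (theta : X) (p : \bar R) :
  metric_on C beta -> metric_on (Yset C) dreg -> C theta ->
  (1%:E <= p)%E ->
  forall t : R, 0 <= t ->
  ([set s | VR t setT (dtheta C beta dreg theta p) s /\
            (s `&` C !=set0) /\ (s `&` ~` C !=set0)]
   = \bigcup_(uv in [set uv : R * R | [/\ 0 <= uv.1, 0 <= uv.2 &
                                          lp_norm p uv.1 uv.2 <= t]])
       join (VR t (Cle C beta theta uv.1) beta)
            (VR t (Yle C dreg uv.2) (dYo dreg)))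
  /\
  (p = +oo%E ->
   VR t setT (dtheta C beta dreg theta p)
   = VR t C beta `|` VR t (~` C) (dYo dreg)
     `|` join (VR t (Cle C beta theta t) beta) (VR t (Yle C dreg t) (dYo dreg))).
Proof.
move=> mb md Ct p1 t t0; split; first exact: (part1 _ _ _ _ _ mb md Ct p1 _ t0).
move=> pinf; apply/seteqP; split => s.
- move=> Vs; have [fs ns _ ds] := Vs.
  have [nC|eC] := pselect (s `&` C !=set0); last first.
    left; right; split => // [x sx cx|x y sx sy].
      by apply: eC; exists x.
    have cx : ~ C x by move=> cx; apply: eC; exists x.
    have cy : ~ C y by move=> cy; apply: eC; exists y.
    by rewrite /dYo -(dtNN C beta dreg theta p _ _ cx cy); apply: ds.
  have [nN|eN] := pselect (s `&` ~` C !=set0); last first.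
    left; left; split => // [x sx|x y sx sy].
      by apply: contrapT => cx; apply: eN; exists x.
    have cx : C x by apply: contrapT => cx; apply: eN; exists x.
    have cy : C y by apply: contrapT => cy; apply: eN; exists y.
    by rewrite -(dtCC C beta dreg theta p _ _ cx cy); apply: ds.
  right.
  have : [set s | VR t setT (dtheta C beta dreg theta p) s /\
            (s `&` C !=set0) /\ (s `&` ~` C !=set0)] s by [].
  rewrite (part1 _ _ _ _ _ mb md Ct p1 _ t0).
  move=> [[u v] [/= u0 v0]]; rewrite pinf /= ge_max => /andP[ut vt].
  move=> [a [b [[fa na sa da] [fb nb sb db] na' nb' ->]]].
  exists a, b; split => //.
    split => // x ax; have [cx bx] := sa x ax; split => //; exact: le_trans ut.
  split => // x ax; have [cx bx] := sb x ax; split => //; exact: le_trans vt.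
- move=> [[[fs ns sC ds]|[fs ns sN ds]]|].
  + split => // x y sx sy; rewrite dtCC //; [exact: ds|exact: sC|exact: sC].
  + split => // x y sx sy; rewrite dtNN //; [exact: ds|exact: sN|exact: sN].
  + move=> [a [b [Ka Kb na nb ->]]].
    apply: (rev_dir _ _ _ _ _ mb md Ct p1 _ _ _ _ _ t0 t0 _ Ka Kb).
    by rewrite pinf /= maxxx.
Qed.
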